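(* (Structure of pre-$\mathbb{Z}/2\mathbb{Z}$-Frobenius manifolds.) With $H$, $\eta$, $Y$ constructed as in the context, suppose that $Y$ has $G$-degree $e$ as an element of $\mathrm{T}\llbracket H^\ast\rrbracket=\prod_n (H^\ast)^{\otimes n}$, and that $\eta_i,\eta_v,\eta_g$ are $S^2$-homogeneous of degrees $(i,i)$, $(v,v)$, $(g,g)$ respectively. Then $((H,\rho),\eta,Y)$ is a pre-$\mathbb{Z}/2\mathbb{Z}$-Frobenius manifold. Conversely, the $\eta$ and $Y$ of any pre-$\mathbb{Z}/2\mathbb{Z}$-Frobenius manifold $((H,\rho),\eta,Y)$ are of this form, and are uniquely determined by the metrics and potentials of the two Frobenius manifolds it contains (on $H_e$ and on $H^G$).
   Context: $G=\mathbb{Z}/2\mathbb{Z}=\{e,g\}$, $k$ a field of characteristic zero. Let $(H_e,\eta_e,Y_e)$ and $(H^G,\eta^G,Y^G)$ be formal Frobenius manifolds (potentials in the power series ring satisfying WDVV). Suppose there is a vector space $H_i$ with linear injections $\iota_e:H_i\to H_e$, $\iota^G:H_i\to H^G$ such that $\iota_e^\ast Y_e=(\iota^G)^\ast Y^G=:Y_i$ and $\iota_e^\ast\eta_e=(\iota^G)^\ast\eta^G=:\eta_i$. Fix decompositions $H_e=H_i\oplus H_v$, $H^G=H_i\oplus H_g$, and write $Y_e=Y_i+Y_v$, $Y^G=Y_i+Y_g$, $\eta_e=\eta_i+\eta_v$, $\eta^G=\eta_i+\eta_g$ with $\iota_e^\ast Y_v=(\iota^G)^\ast Y_g=0$ and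 $\iota_e^\ast\eta_v=(\iota^G)^\ast\eta_g=0$. Let $H:=H_i\oplus H_v\oplus H_g$ be the $\mathbb{Z}/2\mathbb{Z}$-graded $\mathbb{Z}/2\mathbb{Z}$-module with $H_e=H_i\oplus H_v$ in degree $e$, $H_g$ in degree $g$, where $g$ acts trivially on $H_i$ and $H_g$ and by $-1$ on $H_v$. Set $Y:=Y_i+Y_v+Y_g$ and $\eta:=\eta_i+\eta_v+\eta_g$, extended by zero. With $S=\{i,v,g\}$, homogeneous terms have $S^n$-degrees. A pre-$G$-Frobenius manifold $((H,\rho),\eta,Y)$ is: a finite dimensional self-invariant $G$-graded $G$-module, a $G$-invariant nondegenerate symmetric bilinear form $\eta$ preserving the $G$-grading, and $Y=\sum_{n\ge3}Y^n$ with each $Y^n$ a $B_n$-invariant $n$-linear form on $H$ of $G$-degree $e$ (with $B_n$ acting through the braiding $v\otimes w\mapsto (h\cdot w)\otimes v$ for $v\in H_h$), such that the restrictions of $Y$ and $\eta$ to $H_e$ and to $H^G$ are formal Frobenius manifolds. *)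

(* Defs.v *)
From HB Require Import structures.
From mathcomp Require Import all_boot all_order all_algebra.
Set Implicit Arguments.
Unset Strict Implicit.
Unset Printing Implicit Defensive.
Import GRing.Theory.
Local Open Scope ring_scope.

(* An n-linear form on H for every n is encoded as a single function
   Y : seq H -> k ; the n-linear form Y^n is Y restricted to lists of size n.
   A bilinear form is a function H -> H -> k. *)

Section Defs.
Variables (k : fieldType) (H : vectType k).

Definition inU (U : {vspace H}) (s : seq H) : bool := all (fun x => x \in U) s.

Definition multilinear_on (U : {vspace H}) (Y : seq H -> k) : Prop :=
  forall (s1 s2 : seq H) (a : k) (x y : H),
    inU U s1 -> inU U s2 -> x \in U -> y \in U ->
    Y (s1 ++ (a *: x + y) :: s2) = a * Y (s1 ++ x :: s2) + Y (s1 ++ y :: s2).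

Definition symmetric_on (U : {vspace H}) (Y : seq H -> k) : Prop :=
  forall s t : seq H, inU U s -> perm_eq s t -> Y s = Y t.

(* Y = sum_{n >= 3} Y^n with Y^n symmetric n-linear : an element of the
   formal power series ring k[[U^*]] (char 0), without terms of degree < 3 *)
Definition potential_on (U : {vspace H}) (Y : seq H -> k) : Prop :=
  [/\ multilinear_on U Y, symmetric_on U Y &
      forall s, inU U s -> (size s < 3)%N -> Y s = 0].

Definition bilinear_on (U : {vspace H}) (eta : H -> H -> k) : Prop :=
  (forall (a : k) (x y z : H), x \in U -> y \in U -> z \in U ->
     eta (a *: x + y) z = a * eta x z + eta y z) /\
  (forall (a : k) (x y z : H), x \in U -> y \in U -> z \in U ->
     eta z (a *: x + y) = a * eta z x + eta z y).

Definition symmetric_bil_on (U : {vspace H}) (eta : H -> H -> k) : Prop :=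
  forall x y, x \in U -> y \in U -> eta x y = eta y x.

Definition nondeg_on (U : {vspace H}) (eta : H -> H -> k) : Prop :=
  forall x, x \in U -> (forall y, y \in U -> eta x y = 0) -> x = 0.

(* b is a basis of U and c is its eta-dual basis: sum_i b_i (x) c_i is the
   inverse metric eta^{-1} *)
Definition dual_bases_on (U : {vspace H}) (eta : H -> H -> k) (b c : seq H) :=
  [/\ basis_of U b, size c = size b, inU U c &
      forall i j, (i < size b)%N -> (j < size b)%N ->
        eta (nth 0 b i) (nth 0 c j) = (i == j)%:R].

(* WDVV for Phi = sum_n Y^n(x,..,x)/n!, written componentwise:
   Phi_{a1 a2 e} eta^{ef} Phi_{f a3 a4} = Phi_{a1 a3 e} eta^{ef} Phi_{f a2 a4},
   polarized in the point x (sum over splittings of x_1..x_n). *)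
Definition WDVV_on (U : {vspace H}) (eta : H -> H -> k) (Y : seq H -> k) : Prop :=
  forall (b c : seq H), dual_bases_on U eta b c ->
  forall (xs : seq H) (a1 a2 a3 a4 : H),
    inU U xs -> inU U [:: a1; a2; a3; a4] ->
    \sum_(m : (size xs).-tuple bool) \sum_(i < size b)
        Y (a1 :: a2 :: mask m xs ++ [:: nth 0 b i]) *
        Y (nth 0 c i :: mask (map negb m) xs ++ [:: a3; a4])
    = \sum_(m : (size xs).-tuple bool) \sum_(i < size b)
        Y (a1 :: a3 :: mask m xs ++ [:: nth 0 b i]) *
        Y (nth 0 c i :: mask (map negb m) xs ++ [:: a2; a4]).

Definition formal_frobenius_on (U : {vspace H}) (eta : H -> H -> k)
    (Y : seq H -> k) : Prop :=
  [/\ bilinear_on U eta, symmetric_bil_on U eta, nondeg_on U eta,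
      potential_on U Y & WDVV_on U eta Y].

Definition fixed_space (rho : 'End(H)) : {vspace H} := lker (rho - \1%VF).

(* pre-Z/2Z-Frobenius manifold ((H, rho), eta, Y); H0 = H_e, H1 = H_g is the
   Z/2Z-grading, rho is the action of g. *)
Definition pre_Z2_frobenius (H0 H1 : {vspace H}) (rho : 'End(H))
    (eta : H -> H -> k) (Y : seq H -> k) : Prop :=
  [/\ directv (H0 + H1) /\ (H0 + H1)%VS = fullv,
      [/\ forall x, rho (rho x) = x,
          forall x, x \in H0 -> rho x \in H0 &
          forall x, x \in H1 -> rho x \in H1],
      (forall x, x \in H1 -> rho x = x) /\
      [/\ bilinear_on fullv eta, symmetric_bil_on fullv eta,
          nondeg_on fullv eta,
          forall x y, eta (rho x) (rho y) = eta x y &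
          forall x y, x \in H0 -> y \in H1 -> eta x y = 0],
      (* Y = sum_{n>=3} Y^n, multilinear, B_n-invariant, of G-degree e *)
      [/\ multilinear_on fullv Y,
          (forall s, (size s < 3)%N -> Y s = 0),
          (forall s1 s2 v w, v \in H0 ->
             Y (s1 ++ v :: w :: s2) = Y (s1 ++ w :: v :: s2)),
          (forall s1 s2 v w, v \in H1 ->
             Y (s1 ++ v :: w :: s2) = Y (s1 ++ rho w :: v :: s2)) &
          (forall s, all (fun x => (x \in H0) || (x \in H1)) s ->
             odd (count (fun x => x \in H1) s) -> Y s = 0)] &
      formal_frobenius_on H0 eta Y /\
      formal_frobenius_on (fixed_space rho) eta Y].

Definition pr_i (Hi Hv Hg : {vspace H}) : 'End(H) := daddv_pi Hi (Hv + Hg).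
Definition pr_v (Hi Hv Hg : {vspace H}) : 'End(H) := daddv_pi Hv (Hi + Hg).
Definition pr_g (Hi Hv Hg : {vspace H}) : 'End(H) := daddv_pi Hg (Hi + Hv).
Definition pr_e Hi Hv Hg (x : H) : H := pr_i Hi Hv Hg x + pr_v Hi Hv Hg x.
Definition pr_G Hi Hv Hg (x : H) : H := pr_i Hi Hv Hg x + pr_g Hi Hv Hg x.

Definition glue_rho (Hi Hv Hg : {vspace H}) : 'End(H) :=
  (pr_i Hi Hv Hg - pr_v Hi Hv Hg + pr_g Hi Hv Hg)%R.

Definition Yi_of Hi Hv Hg (Ye : seq H -> k) (s : seq H) : k :=
  Ye (map (pr_i Hi Hv Hg) s).
Definition Yv_of Hi Hv Hg (Ye : seq H -> k) (s : seq H) : k :=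
  Ye (map (pr_e Hi Hv Hg) s) - Ye (map (pr_i Hi Hv Hg) s).
Definition Yg_of Hi Hv Hg (YG : seq H -> k) (s : seq H) : k :=
  YG (map (pr_G Hi Hv Hg) s) - YG (map (pr_i Hi Hv Hg) s).
Definition glue_pot Hi Hv Hg (Ye YG : seq H -> k) (s : seq H) : k :=
  Yi_of Hi Hv Hg Ye s + Yv_of Hi Hv Hg Ye s + Yg_of Hi Hv Hg YG s.

Definition etai_of Hi Hv Hg (etae : H -> H -> k) (x y : H) : k :=
  etae (pr_i Hi Hv Hg x) (pr_i Hi Hv Hg y).
Definition etav_of Hi Hv Hg (etae : H -> H -> k) (x y : H) : k :=
  etae (pr_e Hi Hv Hg x) (pr_e Hi Hv Hg y)
  - etae (pr_i Hi Hv Hg x) (pr_i Hi Hv Hg y).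
Definition etag_of Hi Hv Hg (etaG : H -> H -> k) (x y : H) : k :=
  etaG (pr_G Hi Hv Hg x) (pr_G Hi Hv Hg y)
  - etaG (pr_i Hi Hv Hg x) (pr_i Hi Hv Hg y).
Definition glue_met Hi Hv Hg (etae etaG : H -> H -> k) (x y : H) : k :=
  etai_of Hi Hv Hg etae x y + etav_of Hi Hv Hg etae x y
  + etag_of Hi Hv Hg etaG x y.

Definition eta_homogeneous Hi Hv Hg (etae etaG : H -> H -> k) : Prop :=
  [/\ forall x y, etai_of Hi Hv Hg etae x y =
        etai_of Hi Hv Hg etae (pr_i Hi Hv Hg x) (pr_i Hi Hv Hg y),
      forall x y, etav_of Hi Hv Hg etae x y =
        etav_of Hi Hv Hg etae (pr_v Hi Hv Hg x) (pr_v Hi Hv Hg y) &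
      forall x y, etag_of Hi Hv Hg etaG x y =
        etag_of Hi Hv Hg etaG (pr_g Hi Hv Hg x) (pr_g Hi Hv Hg y)].

Definition Gdegree_e (He Hg : {vspace H}) (Y : seq H -> k) : Prop :=
  forall s, all (fun x => (x \in He) || (x \in Hg)) s ->
    odd (count (fun x => x \in Hg) s) -> Y s = 0.

Definition triple_decomp (Hi Hv Hg : {vspace H}) : Prop :=
  directv (Hi + Hv + Hg) /\ (Hi + Hv + Hg)%VS = fullv.

End Defs.

(* Main.v *)
Require Import Defs.
From HB Require Import structures.
From mathcomp Require Import all_boot all_order all_algebra.
From mathcomp Require Import ring.
Set Implicit Arguments. Unset Strict Implicit. Unset Printing Implicit Defensive.
Import GRing.Theory.
Local Open Scope ring_scope.

Section Char0.
Variable k : fieldType.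
Hypothesis Hchar : [pchar k] =i pred0.
Variable H : vectType k.

Lemma two_neq0 : (2%:R : k) != 0.
Proof. by move/pcharf0P: Hchar => ->. Qed.

Lemma vec_double0 (x : H) : x + x = 0 -> x = 0.
Proof.
move=> h; apply/eqP; move: h; rewrite -mulr2n -scaler_nat => /eqP.
by rewrite scaler_eq0 (negPf two_neq0).
Qed.

Lemma sc_double0 (x : k) : x + x = 0 -> x = 0.
Proof.
move=> h; apply/eqP; move: h; rewrite -mulr2n -mulr_natl => /eqP.
by rewrite mulf_eq0 (negPf two_neq0).
Qed.
End Char0.

Section Decomp.
Variables (k : fieldType) (H : vectType k) (Hi Hv Hg : {vspace H}).
Hypothesis td : triple_decomp Hi Hv Hg.

Local Notation pi := (pr_i Hi Hv Hg).
Local Notation pv := (pr_v Hi Hv Hg).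
Local Notation pg := (pr_g Hi Hv Hg).

Lemma decomp_uniq a b c a' b' c' :
  a \in Hi -> b \in Hv -> c \in Hg -> a' \in Hi -> b' \in Hv -> c' \in Hg ->
  a + b + c = a' + b' + c' -> [/\ a = a', b = b' & c = c'].
Proof.
case: td => dx _ Ha Hb Hc Ha' Hb' Hc' E.
move: (dx); rewrite directv_addE => /and3P[dx1 _ /eqP c12].
have dx1' : directv (Hi + Hv) := dx1.
move/directv_addP: dx1' => c1.
have Ec : c = c'.
  have : c' - c \in ((Hi + Hv) :&: Hg)%VS.
    rewrite memv_cap; apply/andP; split; last exact: memvB.
    have -> : c' - c = (a - a') + (b - b').
      by rewrite -[c'](addKr (a'+b')) -E addrA addrK addrC opprD addrACA.
    by rewrite memv_add ?memvB.
  by rewrite c12 memv0 subr_eq0 => /eqP.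
subst c'; move/addIr: E => E.
have : a - a' \in (Hi :&: Hv)%VS.
  rewrite memv_cap; apply/andP; split; first exact: memvB.
  have -> : a - a' = b' - b.
    have -> : b' = a + b - a' by rewrite E addrAC subrr add0r.
    by rewrite [RHS]addrAC addrK.
  by rewrite memvB.
rewrite c1 memv0 subr_eq0 => /eqP Ea; split=> //; subst a'.
exact: addrI E.
Qed.

Lemma decomp_ex x : exists a b c, [/\ a \in Hi, b \in Hv, c \in Hg & x = a + b + c].
Proof.
case: td => _ F; have : x \in (Hi + Hv + Hg)%VS by rewrite F memvf.
case/memv_addP => u /memv_addP [a Ha [b Hb ->]] [c Hc ->].
by exists a, b, c.
Qed.

Lemma cap_i : (Hi :&: (Hv + Hg) = 0)%VS.
Proof.
apply/eqP; rewrite -subv0; apply/subvP => x /memv_capP[Hx /memv_addP[b Hb [c Hc E]]].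
have := @decomp_uniq x 0 0 0 b c Hx (mem0v _) (mem0v _) (mem0v _) Hb Hc.
by rewrite !addr0 add0r E => /(_ erefl) [-> _ _]; rewrite mem0v.
Qed.
Lemma cap_v : (Hv :&: (Hi + Hg) = 0)%VS.
Proof.
apply/eqP; rewrite -subv0; apply/subvP => x /memv_capP[Hx /memv_addP[b Hb [c Hc E]]].
have := @decomp_uniq 0 x 0 b 0 c (mem0v _) Hx (mem0v _) Hb (mem0v _) Hc.
by rewrite !addr0 add0r E => /(_ erefl) [_ -> _]; rewrite mem0v.
Qed.
Lemma cap_g : (Hg :&: (Hi + Hv) = 0)%VS.
Proof.
apply/eqP; rewrite -subv0; apply/subvP => x /memv_capP[Hx /memv_addP[b Hb [c Hc E]]].
have := @decomp_uniq 0 0 x b c 0 (mem0v _) (mem0v _) Hx Hb Hc (mem0v _).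
by rewrite !addr0 !add0r E => /(_ erefl) [_ _ ->]; rewrite mem0v.
Qed.

Lemma pi_zero (U V : {vspace H}) v : (U :&: V = 0)%VS -> v \in V -> daddv_pi U V v = 0.
Proof.
move=> c0 Hv0; have c1 : (V :&: U = 0)%VS by rewrite capvC.
have := daddv_pi_add c0 (memv_add (mem0v U) Hv0); rewrite add0r.
rewrite (daddv_pi_id c1 Hv0) => /eqP; by rewrite -subr_eq0 addrK => /eqP.
Qed.

Lemma spec x a b c : a \in Hi -> b \in Hv -> c \in Hg -> x = a + b + c ->
  [/\ pi x = a, pv x = b & pg x = c].
Proof.
move=> Ha Hb Hc ->; split.
- rewrite /pr_i -addrA linearD /= daddv_pi_id ?cap_i // pi_zero ?addr0 ?cap_i //.
  exact: memv_add.
- rewrite /pr_v (addrC a) -addrA linearD /= daddv_pi_id ?cap_v // pi_zero ?addr0 ?cap_v //.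
  exact: memv_add.
- rewrite /pr_g addrC linearD /= daddv_pi_id ?cap_g // pi_zero ?addr0 ?cap_g //.
  exact: memv_add.
Qed.

Lemma mem_pi x : pi x \in Hi. Proof. exact: memv_pi. Qed.
Lemma mem_pv x : pv x \in Hv. Proof. exact: memv_pi. Qed.
Lemma mem_pg x : pg x \in Hg. Proof. exact: memv_pi. Qed.

Lemma decompE x : x = pi x + pv x + pg x.
Proof.
have [a [b [c [Ha Hb Hc E]]]] := decomp_ex x.
by have [-> -> ->] := spec Ha Hb Hc E.
Qed.

Lemma spec_i a : a \in Hi -> [/\ pi a = a, pv a = 0 & pg a = 0].
Proof. by move=> Ha; apply: spec Ha (mem0v _) (mem0v _) _; rewrite !addr0. Qed.
Lemma spec_v a : a \in Hv -> [/\ pi a = 0, pv a = a & pg a = 0].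
Proof. by move=> Ha; apply: spec (mem0v _) Ha (mem0v _) _; rewrite !addr0 add0r. Qed.
Lemma spec_g a : a \in Hg -> [/\ pi a = 0, pv a = 0 & pg a = a].
Proof. by move=> Ha; apply: spec (mem0v _) (mem0v _) Ha _; rewrite !add0r. Qed.

Lemma pii x : pi (pi x) = pi x. Proof. by case: (spec_i (mem_pi x)). Qed.
Lemma pvi x : pv (pi x) = 0. Proof. by case: (spec_i (mem_pi x)). Qed.
Lemma pgi x : pg (pi x) = 0. Proof. by case: (spec_i (mem_pi x)). Qed.
Lemma piv x : pi (pv x) = 0. Proof. by case: (spec_v (mem_pv x)). Qed.
Lemma pvv x : pv (pv x) = pv x. Proof. by case: (spec_v (mem_pv x)). Qed.
Lemma pgv x : pg (pv x) = 0. Proof. by case: (spec_v (mem_pv x)). Qed.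
Lemma pig x : pi (pg x) = 0. Proof. by case: (spec_g (mem_pg x)). Qed.
Lemma pvg x : pv (pg x) = 0. Proof. by case: (spec_g (mem_pg x)). Qed.
Lemma pgg x : pg (pg x) = pg x. Proof. by case: (spec_g (mem_pg x)). Qed.

Lemma in_e x : (x \in (Hi + Hv)%VS) = (pg x == 0).
Proof.
apply/idP/idP.
  by case/memv_addP => a Ha [b Hb ->]; rewrite linearD /=; case: (spec_i Ha) => _ _ ->; case: (spec_v Hb) => _ _ ->; rewrite addr0.
move/eqP => E; rewrite [x]decompE E addr0; exact: memv_add (mem_pi x) (mem_pv x).
Qed.

Lemma in_G x : (x \in (Hi + Hg)%VS) = (pv x == 0).
Proof.
apply/idP/idP.
  by case/memv_addP => a Ha [b Hb ->]; rewrite linearD /=; case: (spec_i Ha) => _ -> _; case: (spec_g Hb) => _ -> _; rewrite addr0.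
move/eqP => E; rewrite [x]decompE E addr0; exact: memv_add (mem_pi x) (mem_pg x).
Qed.

Lemma pe_in x : pr_e Hi Hv Hg x \in (Hi + Hv)%VS.
Proof. exact: memv_add (mem_pi x) (mem_pv x). Qed.
Lemma pG_in x : pr_G Hi Hv Hg x \in (Hi + Hg)%VS.
Proof. exact: memv_add (mem_pi x) (mem_pg x). Qed.
Lemma pi_in_e x : pi x \in (Hi + Hv)%VS.
Proof. by rewrite in_e pgi. Qed.
Lemma pi_in_G x : pi x \in (Hi + Hg)%VS.
Proof. by rewrite in_G pvi. Qed.
Lemma pv_in_e x : pv x \in (Hi + Hv)%VS.
Proof. by rewrite in_e pgv. Qed.
Lemma pg_in_G x : pg x \in (Hi + Hg)%VS.
Proof. by rewrite in_G pvg. Qed.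

Lemma pe_id x : x \in (Hi + Hv)%VS -> pr_e Hi Hv Hg x = x.
Proof. by rewrite in_e => /eqP E; rewrite /pr_e [RHS]decompE E addr0. Qed.
Lemma pG_e x : x \in (Hi + Hv)%VS -> pr_G Hi Hv Hg x = pi x.
Proof. by rewrite in_e => /eqP E; rewrite /pr_G E addr0. Qed.
Lemma pG_id x : x \in (Hi + Hg)%VS -> pr_G Hi Hv Hg x = x.
Proof. by rewrite in_G => /eqP E; rewrite /pr_G [RHS]decompE E addr0. Qed.
Lemma pe_G x : x \in (Hi + Hg)%VS -> pr_e Hi Hv Hg x = pi x.
Proof. by rewrite in_G => /eqP E; rewrite /pr_e E addr0. Qed.

Lemma rhoE x : glue_rho Hi Hv Hg x = pi x - pv x + pg x.
Proof. by rewrite /glue_rho !add_lfunE opp_lfunE. Qed.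

Lemma rho_spec x : [/\ pi (glue_rho Hi Hv Hg x) = pi x,
  pv (glue_rho Hi Hv Hg x) = - pv x & pg (glue_rho Hi Hv Hg x) = pg x].
Proof. by apply: spec (mem_pi x) _ (mem_pg x) (rhoE x); rewrite memvN mem_pv. Qed.

End Decomp.

Section Multi.
Variables (k : fieldType) (H : vectType k) (f : seq H -> k).
Hypothesis mlf : multilinear_on fullv f.

Lemma inU_full (s : seq H) : inU fullv s.
Proof. by apply/allP => x _; exact: memvf. Qed.

Lemma mlD p q x y : f (p ++ (x + y) :: q) = f (p ++ x :: q) + f (p ++ y :: q).
Proof. by rewrite -{1}(scale1r x) mlf ?inU_full ?memvf // mul1r. Qed.

Lemma ml0 p q : f (p ++ 0 :: q) = 0.
Proof. have E := mlD p q 0 0; rewrite addr0 in E. by apply: (addIr (f (p ++ 0 :: q))); rewrite add0r -E. Qed.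

Lemma mlZ p q a x : f (p ++ (a *: x) :: q) = a * f (p ++ x :: q).
Proof. by rewrite -[a *: x]addr0 mlf ?inU_full ?memvf // ml0 addr0. Qed.

Lemma mlN p q x : f (p ++ (- x) :: q) = - f (p ++ x :: q).
Proof. by rewrite -scaleN1r mlZ mulN1r. Qed.

End Multi.

Section Vanish.
Variables (k : fieldType) (H : vectType k) (Hi Hv Hg : {vspace H}).
Hypothesis Hchar : [pchar k] =i pred0.
Hypothesis td : triple_decomp Hi Hv Hg.
Variables (f : seq H -> k) (rho : H -> H).
Hypothesis mlf : multilinear_on fullv f.
Hypothesis br1 : forall s1 s2 v w, v \in (Hi + Hv)%VS ->
  f (s1 ++ v :: w :: s2) = f (s1 ++ w :: v :: s2).
Hypothesis br2 : forall s1 s2 v w, v \in Hg ->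
  f (s1 ++ v :: w :: s2) = f (s1 ++ rho w :: v :: s2).
Hypothesis rhoN : forall w, w \in Hv -> rho w = - w.

Local Notation pi := (pr_i Hi Hv Hg).
Local Notation pv := (pr_v Hi Hv Hg).
Local Notation pg := (pr_g Hi Hv Hg).
Local Notation pe := (pr_e Hi Hv Hg).
Local Notation pG := (pr_G Hi Hv Hg).

Lemma to_front s1 p s2 v : v \in (Hi + Hv)%VS ->
  f (p ++ s1 ++ v :: s2) = f (p ++ v :: s1 ++ s2).
Proof.
move=> Hv0; elim: s1 p => [|x s1 IH] p //=.
rewrite -cat_rcons IH cat_rcons.
by rewrite (br1 _ _ _ Hv0).
Qed.

Lemma vanish0 p q v g : v \in Hv -> g \in Hg -> f (p ++ g :: v :: q) = 0.
Proof.
move=> Hv0 Hg0.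
have Hv1 : v \in (Hi + Hv)%VS by exact: (subvP (addvSr Hi Hv)).
apply: (sc_double0 Hchar).
rewrite {1}br2 // rhoN // mlN // (@br1 p q v g Hv1).
by rewrite addNr.
Qed.

Lemma vanish1 r0 r1 r2 v g : v \in Hv -> g \in Hg ->
  f (r0 ++ g :: r1 ++ v :: r2) = 0.
Proof.
move=> Hv0 Hg0.
have Hv1 : v \in (Hi + Hv)%VS by exact: (subvP (addvSr Hi Hv)).
by rewrite -cat_rcons to_front // cat_rcons vanish0.
Qed.

Lemma vanish2 r0 r1 r2 v g : v \in Hv -> g \in Hg ->
  f (r0 ++ v :: r1 ++ g :: r2) = 0.
Proof.
move=> Hv0 Hg0.
have Hv1 : v \in (Hi + Hv)%VS by exact: (subvP (addvSr Hi Hv)).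
have := to_front (rcons r1 g) r0 r2 Hv1.
move=> E; rewrite -[r1 ++ g :: r2]cat_rcons -E -cats1 -!catA /= catA vanish0 //.
Qed.

Lemma assoc1 (p1 p2 t : seq H) v : p1 ++ v :: p2 ++ t = (p1 ++ v :: p2) ++ t.
Proof. by rewrite -catA. Qed.

Lemma peg x : x = pe x + pg x.
Proof. by rewrite /pr_e -decompE. Qed.
Lemma pGv x : x = pG x + pv x.
Proof. by rewrite /pr_G addrAC -decompE. Qed.

Lemma expA s : forall p1 p2 v, v \in Hv ->
  f (p1 ++ v :: p2 ++ s) = f (p1 ++ v :: p2 ++ map pe s).
Proof.
elim: s => [|x s IH] p1 p2 v Hv0 //=.
rewrite {1}(peg x) assoc1 mlD // -!assoc1 [X in _ + X]vanish2 ?mem_pg // addr0.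
by rewrite -[p2 ++ pe x :: s]cat_rcons IH // cat_rcons.
Qed.

Lemma expB s : forall p1 p2 g, g \in Hg ->
  f (p1 ++ g :: p2 ++ s) = f (p1 ++ g :: p2 ++ map pG s).
Proof.
elim: s => [|x s IH] p1 p2 g Hg0 //=.
rewrite {1}(pGv x) assoc1 mlD // -!assoc1 [X in _ + X]vanish1 ?mem_pv // addr0.
by rewrite -[p2 ++ pG x :: s]cat_rcons IH // cat_rcons.
Qed.

Lemma expC s : forall p,
  f (p ++ s) = f (p ++ map pe s) + f (p ++ map pG s) - f (p ++ map pi s).
Proof.
elim: s => [|x s IH] p /=; first by rewrite addrK.
rewrite {1}(decompE td x) !mlD //.
rewrite -cat_rcons IH !cat_rcons.
have Hpv : pv x \in Hv by apply: mem_pv.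
have Hpg : pg x \in Hg by apply: mem_pg.
have EA := expA s p [::] Hpv; have EB := expB s p [::] Hpg; rewrite /= in EA EB.
rewrite EA EB; ring.
Qed.

End Vanish.

Section Bil.
Variables (k : fieldType) (H : vectType k) (U : {vspace H}) (eta : H -> H -> k).
Hypothesis hb : bilinear_on U eta.

Lemma bDl x y z : x \in U -> y \in U -> z \in U -> eta (x + y) z = eta x z + eta y z.
Proof. by move=> *; rewrite -{1}(scale1r x) hb.1 // mul1r. Qed.
Lemma bDr x y z : x \in U -> y \in U -> z \in U -> eta z (x + y) = eta z x + eta z y.
Proof. by move=> *; rewrite -{1}(scale1r x) hb.2 // mul1r. Qed.
Lemma b0l z : z \in U -> eta 0 z = 0.
Proof.
move=> Hz; have E := bDl (mem0v U) (mem0v U) Hz; rewrite addr0 in E.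
by apply: (addIr (eta 0 z)); rewrite add0r -E.
Qed.
Lemma b0r z : z \in U -> eta z 0 = 0.
Proof.
move=> Hz; have E := bDr (mem0v U) (mem0v U) Hz; rewrite addr0 in E.
by apply: (addIr (eta z 0)); rewrite add0r -E.
Qed.
Lemma bZl a x z : x \in U -> z \in U -> eta (a *: x) z = a * eta x z.
Proof. by move=> Hx Hz; rewrite -[a *: x]addr0 hb.1 ?mem0v // b0l // addr0. Qed.
Lemma bZr a x z : x \in U -> z \in U -> eta z (a *: x) = a * eta z x.
Proof. by move=> Hx Hz; rewrite -[a *: x]addr0 hb.2 ?mem0v // b0r // addr0. Qed.
Lemma bNl x z : x \in U -> z \in U -> eta (- x) z = - eta x z.
Proof. by move=> Hx Hz; rewrite -scaleN1r bZl // mulN1r. Qed.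
Lemma bNr x z : x \in U -> z \in U -> eta z (- x) = - eta z x.
Proof. by move=> Hx Hz; rewrite -scaleN1r bZr // mulN1r. Qed.
End Bil.

Section Transport.
Variables (k : fieldType) (H : vectType k) (U : {vspace H}).

Lemma inU_cat (s1 s2 : seq H) x :
  inU U (s1 ++ x :: s2) = [&& inU U s1, x \in U & inU U s2].
Proof. by rewrite /inU all_cat. Qed.

Lemma inU_mask m (s : seq H) : inU U s -> inU U (mask m s).
Proof. by move=> /allP h; apply/allP => z /mem_mask /h. Qed.

Lemma inU_map (phi : H -> H) s : (forall x, phi x \in U) -> inU U (map phi s).
Proof. by move=> h; apply/allP => _ /mapP [x _ ->]. Qed.

Lemma inU_consE x (s : seq H) : inU U (x :: s) = (x \in U) && inU U s.
Proof. by []. Qed.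

Lemma basis_mem b x : basis_of U b -> x \in b -> x \in U.
Proof. by case/andP => /eqP <- _; exact: memv_span. Qed.

Lemma transport eta Y eta' Y' : formal_frobenius_on U eta Y ->
  (forall x y, x \in U -> y \in U -> eta' x y = eta x y) ->
  (forall s, inU U s -> Y' s = Y s) -> formal_frobenius_on U eta' Y'.
Proof.
move=> [[hb1 hb2] hs hn [hm hsy hsm] hw] Ee EY.
split.
- split=> a x y z Hx Hy Hz; rewrite !Ee ?memvD ?memvZ //.
  + exact: hb1.
  + exact: hb2.
- by move=> x y Hx Hy; rewrite !Ee //; exact: hs.
- by move=> x Hx h; apply: (hn x Hx) => y Hy; rewrite -Ee // h.
- split.
  + move=> s1 s2 a x y H1 H2 Hx Hy; rewrite !EY ?hm // ?inU_cat ?H1 ?H2 ?Hx ?Hy ?memvD ?memvZ //.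
  + move=> s t Hs Pst; rewrite !EY ?(hsy s t) // /inU -(perm_all _ Pst); exact: Hs.
  + by move=> s Hs Hl; rewrite EY // hsm.
- move=> b c [Bb Sc Ic Dbc] xs a1 a2 a3 a4 Hxs Ha.
  have Hb i : (i < size b)%N -> nth 0 b i \in U.
    by move=> hi; apply: (basis_mem Bb); exact: mem_nth.
  have Hc i : (i < size b)%N -> nth 0 c i \in U.
    by move=> hi; apply: (allP Ic); apply: mem_nth; rewrite Sc.
  move: Ha; rewrite /inU /= => /and5P[H1 H2 H3 H4 _].
  have D : dual_bases_on U eta b c.
    split=> // i j hi hj; rewrite -Ee; [exact: Dbc | exact: Hb | exact: Hc].
  have Hm (m : seq bool) : inU U (mask m xs) by apply: inU_mask.
  transitivity (\sum_(m : (size xs).-tuple bool) \sum_(i < size b)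
        Y (a1 :: a2 :: mask m xs ++ [:: nth 0 b i]) *
        Y (nth 0 c i :: mask (map negb m) xs ++ [:: a3; a4])).
    apply: eq_bigr => m _; apply: eq_bigr => i _.
    have hb := Hb i (ltn_ord i); have hc := Hc i (ltn_ord i).
    rewrite !EY //; rewrite /inU /= ?all_cat /= ?H1 ?H2 ?H3 ?H4 ?hb ?hc //= ?andbT; exact: inU_mask.
  rewrite (hw b c D xs a1 a2 a3 a4) //; last by rewrite /inU /= H1 H2 H3 H4.
  apply: eq_bigr => m _; apply: eq_bigr => i _.
  have hb := Hb i (ltn_ord i); have hc := Hc i (ltn_ord i).
  rewrite !EY //; rewrite /inU /= ?all_cat /= ?H1 ?H2 ?H3 ?H4 ?hb ?hc //= ?andbT; exact: inU_mask.
Qed.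
End Transport.

Section MapLemmas.
Variables (k : fieldType) (H : vectType k) (U : {vspace H}) (f : seq H -> k).

Definition lin_to (phi : H -> H) :=
  (forall x, phi x \in U) /\ (forall a x y, phi (a *: x + y) = a *: phi x + phi y).

Lemma ml_map phi : multilinear_on U f -> lin_to phi ->
  multilinear_on fullv (fun s => f (map phi s)).
Proof.
move=> hm [hU hl] s1 s2 a x y _ _ _ _ /=.
by rewrite !map_cat /= hl hm ?hU // inU_map.
Qed.

Lemma sym_map phi (s1 s2 : seq H) v w : symmetric_on U f -> (forall x, phi x \in U) ->
  f (map phi (s1 ++ v :: w :: s2)) = f (map phi (s1 ++ w :: v :: s2)).
Proof.
move=> hs hU; apply: hs; first exact: inU_map.
rewrite !map_cat perm_cat2l /= -[_ :: _ :: map phi s2]/([:: phi v; phi w] ++ map phi s2).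
rewrite -[_ :: _ :: map phi s2]/([:: phi w; phi v] ++ map phi s2) perm_cat2r.
by apply/permP => P /=; rewrite !addn0 addnC.
Qed.

Lemma ml0U p q : multilinear_on U f -> inU U p -> inU U q -> f (p ++ 0 :: q) = 0.
Proof.
move=> hm Hp Hq; have E := hm p q 1 0 0 Hp Hq (mem0v U) (mem0v U).
rewrite scaler0 addr0 mul1r in E.
by apply: (addIr (f (p ++ 0 :: q))); rewrite add0r -E.
Qed.

Lemma small_map (phi : H -> H) (s : seq H) : potential_on U f -> (forall x, phi x \in U) ->
  (size s < 3)%N -> f (map phi s) = 0.
Proof. by move=> [_ _ h] hU hs; rewrite h ?size_map // inU_map. Qed.

End MapLemmas.

Lemma ml_add (k : fieldType) (H : vectType k) (f g : seq H -> k) :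
  multilinear_on fullv f -> multilinear_on fullv g ->
  multilinear_on fullv (fun s => f s + g s).
Proof. move=> hf hg s1 s2 a x y A B C D; rewrite hf // hg //; ring. Qed.

Lemma ml_sub (k : fieldType) (H : vectType k) (f g : seq H -> k) :
  multilinear_on fullv f -> multilinear_on fullv g ->
  multilinear_on fullv (fun s => f s - g s).
Proof. move=> hf hg s1 s2 a x y A B C D; rewrite hf // hg //; ring. Qed.

Section Fwd.
Variables (k : fieldType) (H : vectType k) (Hi Hv Hg : {vspace H}).
Hypothesis Hchar : [pchar k] =i pred0.
Hypothesis td : triple_decomp Hi Hv Hg.
Variables (etae etaG : H -> H -> k) (Ye YG : seq H -> k).
Hypothesis Fe : formal_frobenius_on (Hi + Hv)%VS etae Ye.
Hypothesis FG : formal_frobenius_on (Hi + Hg)%VS etaG YG.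
Hypothesis agY : forall s, inU Hi s -> Ye s = YG s.
Hypothesis agE : forall x y, x \in Hi -> y \in Hi -> etae x y = etaG x y.
Hypothesis hom : eta_homogeneous Hi Hv Hg etae etaG.

Local Notation pi := (pr_i Hi Hv Hg).
Local Notation pv := (pr_v Hi Hv Hg).
Local Notation pg := (pr_g Hi Hv Hg).
Local Notation pe := (pr_e Hi Hv Hg).
Local Notation pG := (pr_G Hi Hv Hg).
Local Notation M := (glue_met Hi Hv Hg etae etaG).
Local Notation P := (glue_pot Hi Hv Hg Ye YG).
Local Notation rho := (glue_rho Hi Hv Hg).

Lemma hbe : bilinear_on (Hi + Hv)%VS etae. Proof. by case: Fe. Qed.
Lemma hbG : bilinear_on (Hi + Hg)%VS etaG. Proof. by case: FG. Qed.
Lemma hse : symmetric_bil_on (Hi + Hv)%VS etae. Proof. by case: Fe. Qed.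
Lemma hsG : symmetric_bil_on (Hi + Hg)%VS etaG. Proof. by case: FG. Qed.
Lemma hne : nondeg_on (Hi + Hv)%VS etae. Proof. by case: Fe. Qed.
Lemma hnG : nondeg_on (Hi + Hg)%VS etaG. Proof. by case: FG. Qed.
Lemma hpe : potential_on (Hi + Hv)%VS Ye. Proof. by case: Fe. Qed.
Lemma hpG : potential_on (Hi + Hg)%VS YG. Proof. by case: FG. Qed.

Lemma Mform x y : M x y = etae (pi x) (pi y) + etae (pv x) (pv y) + etaG (pg x) (pg y).
Proof.
case: hom => h1 h2 h3; rewrite /glue_met h1 h2 h3 /etai_of /etav_of /etag_of /pr_e /pr_G.
rewrite !(pii td) !(piv td) !(pvv td) !(pig td) !(pgg td) !add0r.
by rewrite (b0l hbe (mem0v _)) (b0l hbG (mem0v _)) !subr0.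
Qed.

Lemma i_e a : a \in Hi -> a \in (Hi + Hv)%VS.
Proof. exact: (subvP (addvSl _ _)). Qed.
Lemma v_e a : a \in Hv -> a \in (Hi + Hv)%VS.
Proof. exact: (subvP (addvSr _ _)). Qed.
Lemma i_G a : a \in Hi -> a \in (Hi + Hg)%VS.
Proof. exact: (subvP (addvSl _ _)). Qed.
Lemma g_G a : a \in Hg -> a \in (Hi + Hg)%VS.
Proof. exact: (subvP (addvSr _ _)). Qed.

Lemma orth_e a b : a \in Hi -> b \in Hv -> etae a b = 0.
Proof.
move=> Ha Hb; case: hom => _ h2 _; have := h2 a b.
rewrite /etav_of /pr_e.
have [ia va _] := spec_i td Ha; have [ib vb _] := spec_v td Hb.
rewrite !(ia, va, ib, vb) !linear0 !addr0 !add0r (b0r hbe (i_e Ha)) (b0l hbe (v_e Hb)).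
by rewrite (b0l hbe (mem0v _)) !subr0.
Qed.

Lemma orth_G a b : a \in Hi -> b \in Hg -> etaG a b = 0.
Proof.
move=> Ha Hb; case: hom => _ _ h3; have := h3 a b.
rewrite /etag_of /pr_G.
have [ia _ ga] := spec_i td Ha; have [ib _ gb] := spec_g td Hb.
rewrite !(ia, ga, ib, gb) !linear0 !addr0 !add0r (b0r hbG (i_G Ha)) (b0l hbG (g_G Hb)).
by rewrite (b0l hbG (mem0v _)) !subr0.
Qed.

Lemma pie x : pi x \in (Hi + Hv)%VS. Proof. exact: pi_in_e td x. Qed.
Lemma pve x : pv x \in (Hi + Hv)%VS. Proof. exact: pv_in_e td x. Qed.
Lemma piG x : pi x \in (Hi + Hg)%VS. Proof. exact: pi_in_G td x. Qed.
Lemma pgG x : pg x \in (Hi + Hg)%VS. Proof. exact: pg_in_G td x. Qed.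

Lemma M_bil : bilinear_on fullv M.
Proof.
split=> a x y z _ _ _; rewrite !Mform !linearP.
- rewrite (hbe.1 _ _ _ _ (pie x) (pie y) (pie z)) (hbe.1 _ _ _ _ (pve x) (pve y) (pve z)).
  rewrite (hbG.1 _ _ _ _ (pgG x) (pgG y) (pgG z)); ring.
- rewrite (hbe.2 _ _ _ _ (pie x) (pie y) (pie z)) (hbe.2 _ _ _ _ (pve x) (pve y) (pve z)).
  rewrite (hbG.2 _ _ _ _ (pgG x) (pgG y) (pgG z)); ring.
Qed.

Lemma M_sym : symmetric_bil_on fullv M.
Proof.
move=> x y _ _; rewrite !Mform (hse (pie x) (pie y)) (hse (pve x) (pve y)).
by rewrite (hsG (pgG x) (pgG y)).
Qed.

Lemma M_nondeg : nondeg_on fullv M.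
Proof.
move=> x _ h.
have hi : pi x = 0.
  apply: (hne (pie x)) => z Hz.
  have Ez : z = pi z + pv z by move: Hz; rewrite (in_e td) => /eqP E; rewrite {1}(decompE td z) E addr0.
  rewrite Ez (bDr hbe (pie z) (pve z) (pie x)) (orth_e (mem_pi _ _ _ x) (mem_pv _ _ _ z)) addr0.
  have := h (pi z) (memvf _); rewrite Mform (pii td) (pvi td) (pgi td).
  by rewrite (b0r hbe (pve x)) (b0r hbG (pgG x)) !addr0.
have hv : pv x = 0.
  apply: (hne (pve x)) => z Hz.
  have Ez : z = pi z + pv z by move: Hz; rewrite (in_e td) => /eqP E; rewrite {1}(decompE td z) E addr0.
  rewrite Ez (bDr hbe (pie z) (pve z) (pve x)) (hse (pve x) (pie z)).
  rewrite (orth_e (mem_pi _ _ _ z) (mem_pv _ _ _ x)) add0r.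
  have := h (pv z) (memvf _); rewrite Mform (piv td) (pvv td) (pgv td).
  by rewrite (b0r hbe (pie x)) (b0r hbG (pgG x)) !addr0 add0r.
have hg : pg x = 0.
  apply: (hnG (pgG x)) => z Hz.
  have Ez : z = pi z + pg z by move: Hz; rewrite (in_G td) => /eqP E; rewrite {1}(decompE td z) E addr0.
  rewrite Ez (bDr hbG (piG z) (pgG z) (pgG x)) (hsG (pgG x) (piG z)).
  rewrite (orth_G (mem_pi _ _ _ z) (mem_pg _ _ _ x)) add0r.
  have := h (pg z) (memvf _); rewrite Mform (pig td) (pvg td) (pgg td).
  by rewrite (b0r hbe (pie x)) (b0r hbe (pve x)) !add0r.
by rewrite (decompE td x) hi hv hg !addr0.
Qed.

Lemma M_inv x y : M (rho x) (rho y) = M x y.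
Proof.
rewrite !Mform; case: (rho_spec td x) => -> -> ->; case: (rho_spec td y) => -> -> ->.
have hvy : - pv y \in (Hi + Hv)%VS by rewrite memvN pve.
by rewrite (bNl hbe (pve x) hvy) (bNr hbe (pve y) (pve x)) opprK.
Qed.

Lemma M_orth x y : x \in (Hi + Hv)%VS -> y \in Hg -> M x y = 0.
Proof.
move=> Hx Hy; rewrite Mform; move: Hx; rewrite (in_e td) => /eqP ->.
case: (spec_g td Hy) => -> -> _.
by rewrite (b0r hbe (pie x)) (b0r hbe (pve x)) (b0l hbG (pgG y)) !addr0.
Qed.

Lemma lin_pi_e : lin_to (Hi + Hv)%VS pi.
Proof. by split; [exact: pie | move=> *; rewrite linearP]. Qed.
Lemma lin_pi_G : lin_to (Hi + Hg)%VS pi.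
Proof. by split; [exact: piG | move=> *; rewrite linearP]. Qed.
Lemma lin_pe : lin_to (Hi + Hv)%VS pe.
Proof.
split; first exact: pe_in.
by move=> a x y; rewrite /pr_e !linearP scalerDr addrACA.
Qed.
Lemma lin_pG : lin_to (Hi + Hg)%VS pG.
Proof.
split; first exact: pG_in.
by move=> a x y; rewrite /pr_G !linearP scalerDr addrACA.
Qed.

Lemma mle : multilinear_on (Hi + Hv)%VS Ye. Proof. by case: hpe. Qed.
Lemma mlG : multilinear_on (Hi + Hg)%VS YG. Proof. by case: hpG. Qed.
Lemma sye : symmetric_on (Hi + Hv)%VS Ye. Proof. by case: hpe. Qed.
Lemma syG : symmetric_on (Hi + Hg)%VS YG. Proof. by case: hpG. Qed.

Lemma P_ml : multilinear_on fullv P.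
Proof.
have := ml_add (ml_add (ml_map mle lin_pi_e) (ml_sub (ml_map mle lin_pe) (ml_map mle lin_pi_e)))
  (ml_sub (ml_map mlG lin_pG) (ml_map mlG lin_pi_G)).
exact.
Qed.

Lemma peI x : pe x \in (Hi + Hv)%VS. Proof. exact: pe_in. Qed.
Lemma pGI x : pG x \in (Hi + Hg)%VS. Proof. exact: pG_in. Qed.

Lemma P_small s : (size s < 3)%N -> P s = 0.
Proof.
move=> hs; rewrite /glue_pot /Yi_of /Yv_of /Yg_of.
rewrite (small_map hpe pie hs) (small_map hpe peI hs) (small_map hpG piG hs) (small_map hpG pGI hs).
by rewrite !subrr !addr0.
Qed.

Lemma P_br1 s1 s2 v w : P (s1 ++ v :: w :: s2) = P (s1 ++ w :: v :: s2).
Proof.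
rewrite /glue_pot /Yi_of /Yv_of /Yg_of.
rewrite (sym_map s1 s2 v w sye pie) (sym_map s1 s2 v w sye peI).
by rewrite (sym_map s1 s2 v w syG piG) (sym_map s1 s2 v w syG pGI).
Qed.

Lemma sym_swap (U : {vspace H}) (f : seq H -> k) p q a b : symmetric_on U f ->
  inU U p -> inU U q -> a \in U -> b \in U -> f (p ++ a :: b :: q) = f (p ++ b :: a :: q).
Proof.
move=> hs Hp Hq Ha Hb; apply: hs; first by rewrite /inU all_cat /= Ha Hb; apply/and3P.
rewrite perm_cat2l -[a :: b :: q]/([:: a; b] ++ q) -[b :: a :: q]/([:: b; a] ++ q) perm_cat2r.
by apply/permP => Q /=; rewrite !addn0 addnC.
Qed.

Lemma P_br2 s1 s2 v w : v \in Hg -> P (s1 ++ v :: w :: s2) = P (s1 ++ rho w :: v :: s2).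
Proof.
move=> Hv0; case: (spec_g td Hv0) => iv vv gv.
have ev : pe v = 0 by rewrite /pr_e iv vv addr0.
have Gv : pG v = v by rewrite /pr_G iv gv add0r.
case: (rho_spec td w) => ir vr gr.
have Gr : pG (rho w) = pG w by rewrite /pr_G ir gr.
rewrite /glue_pot /Yi_of /Yv_of /Yg_of !map_cat /= iv ev Gv ir Gr.
have q1 : inU (Hi + Hv)%VS (pe w :: map pe s2) by rewrite inU_consE peI /=; apply: inU_map peI.
rewrite (ml0U mle (inU_map s1 peI) q1).
rewrite -[_ ++ [:: pe (rho w), 0 & _]]cat_rcons (ml0U mle _ (inU_map s2 peI)); last first.
  by rewrite -cats1 /inU all_cat /= peI !andbT; apply: inU_map peI.
rewrite (sym_swap sye (inU_map s1 pie) (inU_map s2 pie) (mem0v _) (pie w)).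
rewrite (sym_swap syG (inU_map s1 pGI) (inU_map s2 pGI) (g_G Hv0) (pGI w)).
by rewrite (sym_swap syG (inU_map s1 piG) (inU_map s2 piG) (mem0v _) (piG w)).
Qed.

Lemma fixedE : fixed_space rho = (Hi + Hg)%VS.
Proof.
apply/vspaceP => x; rewrite (in_G td) /fixed_space memv_ker add_lfunE opp_lfunE id_lfunE subr_eq0.
apply/eqP/eqP => [E|E].
  apply: (vec_double0 Hchar); case: (rho_spec td x) => _ + _; rewrite E => h.
  by rewrite {1}h addNr.
by rewrite rhoE E subr0 {3}(decompE td x) E addr0.
Qed.

Lemma Meq_e x y : x \in (Hi + Hv)%VS -> y \in (Hi + Hv)%VS -> M x y = etae x y.
Proof.
move=> Hx Hy; rewrite /glue_met /etai_of /etav_of /etag_of (pe_id td Hx) (pe_id td Hy).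
rewrite (pG_e td Hx) (pG_e td Hy); ring.
Qed.

Lemma Meq_G x y : x \in (Hi + Hg)%VS -> y \in (Hi + Hg)%VS -> M x y = etaG x y.
Proof.
move=> Hx Hy; rewrite /glue_met /etai_of /etav_of /etag_of (pe_G td Hx) (pe_G td Hy).
rewrite (pG_id td Hx) (pG_id td Hy) agE ?mem_pi //; ring.
Qed.

Lemma Peq_e s : inU (Hi + Hv)%VS s -> P s = Ye s.
Proof.
move=> Hs; have E1 : map pe s = s by apply: map_id_in => z /(allP Hs) /(pe_id td).
have E2 : map pG s = map pi s by apply/eq_in_map => z /(allP Hs) /(pG_e td).
by rewrite /glue_pot /Yi_of /Yv_of /Yg_of E1 E2; ring.
Qed.

Lemma Peq_G s : inU (Hi + Hg)%VS s -> P s = YG s.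
Proof.
move=> Hs; have E1 : map pG s = s by apply: map_id_in => z /(allP Hs) /(pG_id td).
have E2 : map pe s = map pi s by apply/eq_in_map => z /(allP Hs) /(pe_G td).
rewrite /glue_pot /Yi_of /Yv_of /Yg_of E1 E2 agY; first ring.
by apply: inU_map; apply: mem_pi.
Qed.

Lemma forward : Gdegree_e (Hi + Hv)%VS Hg P -> pre_Z2_frobenius (Hi + Hv)%VS Hg rho M P.
Proof.
move=> Gd; split.
- split; last by case: td.
  apply/directv_addP; case: td => dx _; move: dx; rewrite directv_addE => /and3P[_ _ /eqP E]; exact: E.
- split.
  + move=> x; rewrite (rhoE Hi Hv Hg (rho x)); case: (rho_spec td x) => -> -> ->.
    by rewrite opprK -decompE.
  + move=> x; rewrite !(in_e td); case: (rho_spec td x) => _ _ ->.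
    done.
  + move=> x Hx; case: (spec_g td Hx) => a b c; by rewrite rhoE a b c subr0 add0r.
- split.
    by move=> x Hx; case: (spec_g td Hx) => a b c; rewrite rhoE a b c subr0 add0r.
  split; [exact: M_bil | exact: M_sym | exact: M_nondeg | exact: M_inv | exact: M_orth].
- split; [exact: P_ml | exact: P_small | by move=> *; exact: P_br1 | exact: P_br2 | exact: Gd].
- split.
    by apply: (transport Fe) => [x y|s]; [exact: Meq_e | exact: Peq_e].
  by rewrite fixedE; apply: (transport FG) => [x y|s]; [exact: Meq_G | exact: Peq_G].
Qed.

End Fwd.



Section Conv.
Variables (k : fieldType) (H : vectType k).
Hypothesis Hchar : [pchar k] =i pred0.
Variables (H0 H1 : {vspace H}) (rho : 'End(H)).
Hypothesis dx : directv (H0 + H1).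
Hypothesis full : (H0 + H1)%VS = fullv.
Hypothesis rr : forall x, rho (rho x) = x.
Hypothesis r0 : forall x, x \in H0 -> rho x \in H0.
Hypothesis rg : forall x, x \in H1 -> rho x = x.

Definition Ci := (H0 :&: fixed_space rho)%VS.
Definition Cv := (H0 :&: lker (rho + \1%VF)%R)%VS.

Lemma in_fix x : (x \in fixed_space rho) = (rho x == x).
Proof. by rewrite memv_ker add_lfunE opp_lfunE id_lfunE subr_eq0. Qed.
Lemma in_neg x : (x \in lker (rho + \1%VF)%R) = (rho x == - x).
Proof. by rewrite memv_ker add_lfunE id_lfunE addr_eq0. Qed.

Lemma Ci_H0 x : x \in Ci -> x \in H0. Proof. by case/memv_capP. Qed.
Lemma Cv_H0 x : x \in Cv -> x \in H0. Proof. by case/memv_capP. Qed.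
Lemma Ci_rho x : x \in Ci -> rho x = x. Proof. by case/memv_capP => _; rewrite in_fix => /eqP. Qed.
Lemma Cv_rho x : x \in Cv -> rho x = - x. Proof. by case/memv_capP => _; rewrite in_neg => /eqP. Qed.

Lemma cap01 : (H0 :&: H1 = 0)%VS.
Proof. exact/directv_addP. Qed.

Lemma split0 x : x \in H0 -> exists a b, [/\ a \in Ci, b \in Cv & x = a + b].
Proof.
move=> Hx; set h : k := (2%:R)^-1.
have h2 : h * 2%:R = 1 by rewrite mulVf // two_neq0.
exists (h *: (x + rho x)), (h *: (x - rho x)); split.
- rewrite /Ci memv_cap memvZ ?memvD ?r0 //= in_fix linearZ linearD /= rr addrC //.
- rewrite /Cv memv_cap memvZ ?memvB ?r0 //= in_neg linearZ linearB /= rr -scalerN opprB //.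
- by rewrite -scalerDr addrACA subrr addr0 -mulr2n -scaler_nat scalerA h2 scale1r.
Qed.

Lemma split01 x : exists x0 x1, [/\ x0 \in H0, x1 \in H1 & x = x0 + x1].
Proof.
have : x \in (H0 + H1)%VS by rewrite full memvf.
by case/memv_addP => x0 H0x [x1 H1x ->]; exists x0, x1.
Qed.

Lemma ctd : triple_decomp Ci Cv H1.
Proof.
split.
- rewrite directv_addE; apply/and3P; split.
  + suff d : directv (Ci + Cv) by exact: d.
    apply/directv_addP/eqP; rewrite -subv0; apply/subvP => x /memv_capP[Hi' Hv'].
    rewrite memv0; apply/eqP; apply: (vec_double0 Hchar).
    by rewrite -{1}(Ci_rho Hi') (Cv_rho Hv') addNr.
  + exact: directv_trivial.
  + rewrite -subv0; apply/subvP => x /memv_capP[/memv_addP[a Ha [b Hb ->]] H1x].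
    rewrite -cap01 memv_cap H1x andbT memvD //; [exact: Ci_H0 | exact: Cv_H0].
- apply/vspaceP => x; rewrite memvf; have [x0 [x1 [H0x H1x ->]]] := split01 x.
  have [a [b [Ha Hb ->]]] := split0 H0x.
  by rewrite memv_add // memv_add.
Qed.

Lemma cH0 : (Ci + Cv)%VS = H0.
Proof.
apply/vspaceP => x; apply/idP/idP.
  by case/memv_addP => a Ha [b Hb ->]; rewrite memvD //; [exact: Ci_H0 | exact: Cv_H0].
by move=> Hx; have [a [b [Ha Hb ->]]] := split0 Hx; exact: memv_add.
Qed.

Lemma cfix : (Ci + H1)%VS = fixed_space rho.
Proof.
apply/vspaceP => x; apply/idP/idP.
  by case/memv_addP => a Ha [c Hc ->]; rewrite in_fix linearD /= Ci_rho // rg.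
rewrite in_fix => /eqP E; have [x0 [x1 [H0x H1x Ex]]] := split01 x.
rewrite Ex memv_add //; rewrite /Ci memv_cap H0x in_fix /=.
by move: E; rewrite Ex linearD /= (rg H1x) => /addIr ->.
Qed.

Local Notation pi := (pr_i Ci Cv H1).
Local Notation pv := (pr_v Ci Cv H1).
Local Notation pg := (pr_g Ci Cv H1).
Local Notation pe := (pr_e Ci Cv H1).
Local Notation pG := (pr_G Ci Cv H1).

Lemma crho x : rho x = glue_rho Ci Cv H1 x.
Proof.
rewrite rhoE {1}(decompE ctd x) !linearD /= Ci_rho ?mem_pi // Cv_rho ?mem_pv //.
by rewrite rg ?mem_pg.
Qed.

Lemma pe_H0 x : pe x \in H0. Proof. by rewrite -cH0 pe_in. Qed.
Lemma pi_H0 x : pi x \in H0. Proof. exact: Ci_H0 (mem_pi _ _ _ x). Qed.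
Lemma pG_fix x : pG x \in fixed_space rho. Proof. by rewrite -cfix pG_in. Qed.

Lemma conv_eta (eta : H -> H -> k) : bilinear_on fullv eta -> symmetric_bil_on fullv eta ->
  (forall x y, eta (rho x) (rho y) = eta x y) ->
  (forall x y, x \in H0 -> y \in H1 -> eta x y = 0) ->
  eta_homogeneous Ci Cv H1 eta eta /\ (forall x y, eta x y = glue_met Ci Cv H1 eta eta x y).
Proof.
move=> hb hs hi ho.
have F (z : H) : z \in (fullv : {vspace H}) := memvf z.
have oiv a b : a \in Ci -> b \in Cv -> eta a b = 0.
  move=> Ha Hb; apply: (sc_double0 Hchar); have := hi a b.
  by rewrite (Ci_rho Ha) (Cv_rho Hb) (bNr hb (F b) (F a)) => E; rewrite -{1}E addNr.
have ovi b a : b \in Cv -> a \in Ci -> eta b a = 0.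
  by move=> Hb Ha; rewrite hs ?F // oiv.
have oge a b : a \in H1 -> b \in H0 -> eta a b = 0.
  by move=> Ha Hb; rewrite hs ?F // ho.
have Epe x y : eta (pe x) (pe y) = eta (pi x) (pi y) + eta (pv x) (pv y).
  rewrite /pr_e (bDl hb) ?F // !(bDr hb) ?F //.
  rewrite (oiv _ _ (mem_pi _ _ _ x) (mem_pv _ _ _ y)) (ovi _ _ (mem_pv _ _ _ x) (mem_pi _ _ _ y)).
  by rewrite addr0 add0r.
have EpG x y : eta (pG x) (pG y) = eta (pi x) (pi y) + eta (pg x) (pg y).
  rewrite /pr_G (bDl hb) ?F // !(bDr hb) ?F //.
  rewrite (ho _ _ (pi_H0 x) (mem_pg _ _ _ y)) (oge _ _ (mem_pg _ _ _ x) (pi_H0 y)).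
  by rewrite addr0 add0r.
have EF x y : eta x y = eta (pi x) (pi y) + eta (pv x) (pv y) + eta (pg x) (pg y).
  rewrite {1}(peg ctd x) {1}(peg ctd y) (bDl hb (F (pe x)) (F (pg x)) (F _)).
  rewrite (bDr hb (F (pe y)) (F (pg y)) (F (pe x))) (bDr hb (F (pe y)) (F (pg y)) (F (pg x))).
  rewrite (ho _ _ (pe_H0 x) (mem_pg _ _ _ y)) (oge _ _ (mem_pg _ _ _ x) (pe_H0 y)) Epe.
  by rewrite addr0 add0r.
split.
- split=> x y.
  + by rewrite /etai_of !(pii ctd).
  + by rewrite /etav_of !Epe !(piv ctd) !(pvv ctd); ring.
  + by rewrite /etag_of !EpG !(pig ctd) !(pgg ctd); ring.
- by move=> x y; rewrite /glue_met /etai_of /etav_of /etag_of Epe EpG EF; ring.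
Qed.

Lemma conv_Y (Y : seq H -> k) : multilinear_on fullv Y ->
  (forall s1 s2 v w, v \in H0 -> Y (s1 ++ v :: w :: s2) = Y (s1 ++ w :: v :: s2)) ->
  (forall s1 s2 v w, v \in H1 -> Y (s1 ++ v :: w :: s2) = Y (s1 ++ rho w :: v :: s2)) ->
  forall s, Y s = glue_pot Ci Cv H1 Y Y s.
Proof.
move=> hm b1 b2 s.
have b1' : forall s1 s2 v w, v \in (Ci + Cv)%VS ->
    Y (s1 ++ v :: w :: s2) = Y (s1 ++ w :: v :: s2) by move=> s1 s2 v w; rewrite cH0; exact: b1.
have := expC Hchar ctd hm b1' b2 Cv_rho s [::].
by rewrite /= => ->; rewrite /glue_pot /Yi_of /Yv_of /Yg_of; ring.
Qed.

End Conv.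


Unset Implicit Arguments.

Theorem theorem5p3 (k : fieldType) (Hchar : [pchar k] =i pred0)
    (H : vectType k) :
  (* forward direction *)
  (forall (Hi Hv Hg : {vspace H}) (etae etaG : H -> H -> k)
          (Ye YG : seq H -> k),
     triple_decomp Hi Hv Hg ->
     formal_frobenius_on (Hi + Hv)%VS etae Ye ->
     formal_frobenius_on (Hi + Hg)%VS etaG YG ->
     (forall s, inU Hi s -> Ye s = YG s) ->
     (forall x y, x \in Hi -> y \in Hi -> etae x y = etaG x y) ->
     Gdegree_e (Hi + Hv)%VS Hg (glue_pot Hi Hv Hg Ye YG) ->
     eta_homogeneous Hi Hv Hg etae etaG ->
     pre_Z2_frobenius (Hi + Hv)%VS Hg (glue_rho Hi Hv Hg)
       (glue_met Hi Hv Hg etae etaG) (glue_pot Hi Hv Hg Ye YG))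
  /\
  (* converse and uniqueness *)
  (forall (H0 H1 : {vspace H}) (rho : 'End(H)) (eta : H -> H -> k)
          (Y : seq H -> k),
     pre_Z2_frobenius H0 H1 rho eta Y ->
     (exists Hi Hv Hg : {vspace H},
        [/\ triple_decomp Hi Hv Hg, (Hi + Hv)%VS = H0 /\ Hg = H1,
            (Hi + Hg)%VS = fixed_space rho /\
            (forall x, rho x = glue_rho Hi Hv Hg x),
            eta_homogeneous Hi Hv Hg eta eta /\
            (forall x y, eta x y = glue_met Hi Hv Hg eta eta x y) &
            (forall s, Y s = glue_pot Hi Hv Hg Y Y s)])
     /\
     (forall (eta' : H -> H -> k) (Y' : seq H -> k),
        pre_Z2_frobenius H0 H1 rho eta' Y' ->
        (forall x y, x \in H0 -> y \in H0 -> eta' x y = eta x y) ->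
        (forall x y, x \in fixed_space rho -> y \in fixed_space rho ->
           eta' x y = eta x y) ->
        (forall s, inU H0 s -> Y' s = Y s) ->
        (forall s, inU (fixed_space rho) s -> Y' s = Y s) ->
        (forall x y, eta' x y = eta x y) /\ (forall s, Y' s = Y s))).
Proof.
split.
  move=> Hi Hv Hg etae etaG Ye YG td Fe FG agY agE Gd hom.
  exact: (forward Hchar td Fe FG agY agE hom Gd).
move=> H0 H1 rho eta Y pz.
case: pz => [[dx full] [rr r0 r1] [rg [hb hs hn hi ho]] [hm _ b1 b2 _] _].
have [hom Eg] := conv_eta Hchar dx full rr r0 hb hs hi ho.
have EY := conv_Y Hchar dx full rr r0 hm b1 b2.
split.
  exists (Ci H0 rho), (Cv H0 rho), H1; split.
  - exact: (ctd Hchar dx full rr r0).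
  - by split; [exact: (cH0 Hchar rr r0) |].
  - by split; [exact: (cfix full rg) | exact: (crho Hchar dx full rr r0 rg)].
  - by split.
  - exact: EY.
move=> eta' Y' pz' ag0 agF agY0 agYF.
case: pz' => [_ _ [_ [hb' hs' _ hi' ho']] [hm' _ b1' b2' _] _].
have [_ Eg'] := conv_eta Hchar dx full rr r0 hb' hs' hi' ho'.
have EY' := conv_Y Hchar dx full rr r0 hm' b1' b2'.
have piH x : pr_i (Ci H0 rho) (Cv H0 rho) H1 x \in H0 := pi_H0 H0 H1 rho x.
have peH x : pr_e (Ci H0 rho) (Cv H0 rho) H1 x \in H0 := pe_H0 Hchar H1 rr r0 x.
have pGF x : pr_G (Ci H0 rho) (Cv H0 rho) H1 x \in fixed_space rho := pG_fix full rg x.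
split.
  move=> x y; rewrite (Eg' x y) (Eg x y) /glue_met /etai_of /etav_of /etag_of.
  by rewrite (ag0 _ _ (piH x) (piH y)) (ag0 _ _ (peH x) (peH y)) (agF _ _ (pGF x) (pGF y)).
move=> s; rewrite (EY' s) (EY s) /glue_pot /Yi_of /Yv_of /Yg_of.
rewrite (agY0 _ (inU_map s piH)) (agY0 _ (inU_map s peH)) (agYF _ (inU_map s pGF)).
done.
Qed.
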